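(* Let $G$ be a group acting on a set $X$, let $Y$ be a finite subset of $X$ and set \[\mu=\inf_{A\in\mathcal{P}_{\mathrm{fin}}(G)\setminus\{\emptyset\}}\frac{|A\cdot Y|}{|A|}.\] Then either $\mu=0$, or for every $\lambda\in[0,\mu]$ there exists a finite subgroup $H$ of $G$ containing $G_Y$ such that, writing $c_Y(A)=|A\cdot Y|-\lambda|A|$, \[c_Y(A)\geq c_Y(H)\geq|Y|-\lambda|H|\] for every nonempty finite subset $A$ of $G$.
   Context: $\mathcal{P}_{\mathrm{fin}}(G)$ is the set of finite subsets of $G$; $A\cdot Y=\{a\cdot y\mid a\in A,y\in Y\}$; $G_Y=\{g\in G\mid g\cdot Y=Y\}$ is the stabilizer of $Y$. *)

(* Defs.v *)
From HB Require Import structures.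
From mathcomp Require Import all_boot all_order all_algebra.
From mathcomp Require Import finmap.
From mathcomp Require Import all_classical all_reals.
Set Implicit Arguments.
Unset Strict Implicit.
Unset Printing Implicit Defensive.
Import Order.TTheory GRing.Theory Num.Theory.
Local Open Scope fset_scope.

Section Defs.
Variables (G : groupType) (X : choiceType).

Definition is_action (act : G -> X -> X) : Prop :=
  (forall x, act 1%g x = x) /\
  (forall g h x, act (g * h)%g x = act g (act h x)).

Definition actset (act : G -> X -> X) (A : {fset G}) (Y : {fset X}) : {fset X} :=
  [fset act a y | a in A, y in Y].

Definition in_stab (act : G -> X -> X) (Y : {fset X}) (g : G) : Prop :=
  actset act [fset g] Y = Y.

Definition is_subgroup (H : {fset G}) : Prop :=
  (1%g \in H) /\
  (forall g h, g \in H -> h \in H -> (g * h)%g \in H) /\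
  (forall g, g \in H -> (g^-1)%g \in H).

Definition mu (R : realType) (act : G -> X -> X) (Y : {fset X}) : R :=
  inf [set r : R | exists A : {fset G},
        A != fset0 /\ r = (#|` actset act A Y|%:R / #|` A|%:R)%R].

Definition cY (R : realType) (act : G -> X -> X) (Y : {fset X}) (lam : R)
  (A : {fset G}) : R :=
  (#|` actset act A Y|%:R - lam * #|` A|%:R)%R.

End Defs.

(* Submission.v *)
Require Import Defs.
From HB Require Import structures.
From mathcomp Require Import all_boot all_order all_algebra.
From mathcomp Require Import finmap.
From mathcomp Require Import all_classical all_reals.
From mathcomp Require Import ring lra zify.
From Stdlib Require Import Lia.
Set Implicit Arguments.
Unset Strict Implicit.
Unset Printing Implicit Defensive.
Import Order.TTheory GRing.Theory Num.Theory.
Local Open Scope fset_scope.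
Local Open Scope ring_scope.
Section Basics.
Variables (G : groupType) (X : choiceType) (act : G -> X -> X).
Hypothesis Hact : is_action act.
Variable Y : {fset X}.

Lemma act1 x : act 1%g x = x. Proof. by case: Hact. Qed.
Lemma actM g h x : act (g * h)%g x = act g (act h x). Proof. by case: Hact. Qed.
Lemma actK g x : act (g^-1)%g (act g x) = x.
Proof. by rewrite -actM mulVg act1. Qed.
Lemma act_inj g : injective (act g).
Proof. exact: can_inj (actK g). Qed.

Lemma actsetP A x : reflect (exists2 a, a \in A & exists2 y, y \in Y & x = act a y)
  (x \in actset act A Y).
Proof. exact: imfset2P. Qed.

Lemma mem_actset A a y : a \in A -> y \in Y -> act a y \in actset act A Y.
Proof. by move=> aA yY; apply/actsetP; exists a => //; exists y. Qed.

Lemma actsetS A B : A `<=` B -> actset act A Y `<=` actset act B Y.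
Proof.
move=> /fsubsetP AB; apply/fsubsetP => x /actsetP [a aA [y yY ->]].
by apply: mem_actset => //; apply: AB.
Qed.

Lemma actsetU A B : actset act (A `|` B) Y = actset act A Y `|` actset act B Y.
Proof.
apply/fsetP => x; rewrite in_fsetU; apply/actsetP/orP.
  move=> [a]; rewrite in_fsetU => /orP[aA|aB] [y yY ->].
    by left; apply: mem_actset.
  by right; apply: mem_actset.
by case=> /actsetP [a aA [y yY ->]]; exists a; rewrite ?in_fsetU ?aA ?aB ?orbT //; exists y.
Qed.

Lemma actsetI A B : actset act (A `&` B) Y `<=` actset act A Y `&` actset act B Y.
Proof.
by rewrite fsubsetI !actsetS ?fsubsetIl ?fsubsetIr.
Qed.

Definition aY A := #|` actset act A Y|.

Lemma aY_submod A B : (aY (A `|` B) + aY (A `&` B) <= aY A + aY B)%N.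
Proof.
rewrite /aY actsetU -(cardfsUI (actset act A Y)) leq_add2l.
exact: fsubset_leq_card (actsetI A B).
Qed.

Lemma aY_mono A B : A `<=` B -> (aY A <= aY B)%N.
Proof. by move=> AB; apply: fsubset_leq_card; apply: actsetS. Qed.

Definition ltrans (g : G) (A : {fset G}) : {fset G} := [fset (g * a)%g | a in A].
Definition rtrans (A : {fset G}) (g : G) : {fset G} := [fset (a * g)%g | a in A].

Lemma card_ltrans g A : #|` ltrans g A| = #|` A|.
Proof. by rewrite /ltrans card_imfset //=; apply: mulgI. Qed.

Lemma card_rtrans g A : #|` rtrans A g| = #|` A|.
Proof. by rewrite /rtrans card_imfset //=; apply: mulIg. Qed.

Lemma actset_ltrans g A : actset act (ltrans g A) Y = [fset act g x | x in actset act A Y].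
Proof.
apply/fsetP => x; apply/actsetP/imfsetP.
  move=> [b /imfsetP [a aA ->] [y yY ->]]; exists (act a y); first exact: mem_actset.
  by rewrite actM.
move=> [z /actsetP [a aA [y yY ->]] ->]; exists (g * a)%g; first exact: in_imfset.
by exists y => //; rewrite actM.
Qed.

Lemma aY_ltrans g A : aY (ltrans g A) = aY A.
Proof. by rewrite /aY actset_ltrans card_imfset //=; apply: act_inj. Qed.

Lemma aY_ge_Y A : 1%g \in A -> (#|` Y| <= aY A)%N.
Proof.
move=> A1; apply: fsubset_leq_card; apply/fsubsetP => y yY.
by rewrite -(act1 y); apply: mem_actset.
Qed.

Lemma aY_ge_Y' A : A != fset0 -> (#|` Y| <= aY A)%N.
Proof.
case/fset0Pn => a aA.
rewrite -(aY_ltrans (a^-1)%g) aY_ge_Y //.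
by apply/imfsetP; exists a => //; rewrite mulVg.
Qed.

End Basics.

Section FinMin.
Variable R : realType.

Lemma fin_min1 (T : Type) (P : T -> Prop) (k : T -> nat) (f : T -> R)
  (kf : forall t t', P t -> P t' -> k t = k t' -> f t = f t') K :
  forall Q : T -> Prop, (forall t, Q t -> P t) -> (exists t, Q t) -> (forall t, Q t -> (k t < K)%N) ->
  exists t, Q t /\ forall t', Q t' -> f t <= f t'.
Proof.
elim: K => [|K IH] Q QP [t0 Qt0] Hk; first by have := Hk _ Qt0.
have [[t1 [Qt1 lt1]]|nQ] := pselect (exists t, Q t /\ (k t < K)%N).
  have [t2 [[Qt2 _] min2]] := IH (fun t => Q t /\ (k t < K)%N) (fun t H => QP _ H.1)
     (ex_intro _ t1 (conj Qt1 lt1)) (fun t H => H.2).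
  have [[t3 [Qt3 eq3]]|nK] := pselect (exists t, Q t /\ k t = K).
    have [le23|lt32] := leP (f t2) (f t3).
      exists t2; split => // t' Qt'.
      have := Hk _ Qt'; rewrite ltnS leq_eqVlt => /orP[/eqP e|l].
        by rewrite (kf t' t3) ?e ?eq3 //; apply: QP.
      exact: min2.
    exists t3; split => // t' Qt'.
    have := Hk _ Qt'; rewrite ltnS leq_eqVlt => /orP[/eqP e|l].
      by rewrite (kf t' t3) ?e ?eq3 //; apply: QP.
    by apply: le_trans (ltW lt32) (min2 _ _).
  exists t2; split => // t' Qt'; apply: min2; split => //.
  have := Hk _ Qt'; rewrite ltnS leq_eqVlt => /orP[/eqP e|//].
  by exfalso; apply: nK; exists t'.
exists t0; split => // t' Qt'.
have e : forall t, Q t -> k t = K.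
  move=> t Qt; have := Hk _ Qt; rewrite ltnS leq_eqVlt => /orP[/eqP //|l].
  by exfalso; apply: nQ; exists t.
by rewrite (kf t' t0) ?e //; apply: QP.
Qed.

Lemma code_inj (a b c d K : nat) : (b < K)%N -> (d < K)%N ->
  (a * K + b = c * K + d)%N -> a = c /\ b = d.
Proof.
move=> bK dK e; have [ac|ca|ac] := ltngtP a c.
- by have := leq_mul ac (leqnn K); lia.
- by have := leq_mul ca (leqnn K); lia.
- by subst; lia.
Qed.

Lemma fin_min2 (T : Type) (k1 k2 : T -> nat) (f : T -> R) K1 K2
  (kf : forall t t', k1 t = k1 t' -> k2 t = k2 t' -> f t = f t')
  (Q : T -> Prop) : (exists t, Q t) ->
  (forall t, Q t -> (k1 t < K1)%N /\ (k2 t < K2)%N) ->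
  exists t, Q t /\ forall t', Q t' -> f t <= f t'.
Proof.
move=> exQ Hk.
apply: (@fin_min1 T Q (fun t => k1 t * K2 + k2 t)%N f _ (K1 * K2)%N) => //.
- move=> t t' Qt Qt' e; have [_ b] := Hk _ Qt; have [_ d] := Hk _ Qt'.
  by have [e1 e2] := code_inj b d e; apply: kf.
- move=> t Qt; case: (Hk _ Qt) => a b; nia.
Qed.
End FinMin.

Section Main.
Variables (G : groupType) (X : choiceType) (act : G -> X -> X).
Hypothesis Hact : is_action act.
Variable Y : {fset X}.
Variable R : realType.

Local Notation aY := (aY act Y).
Local Notation mu := (mu R act Y).
Local Notation c := (cY act Y).

Lemma cE (lam : R) A : c lam A = (aY A)%:R - lam * (#|` A|)%:R.
Proof. by []. Qed.

Lemma mu_props : 0 <= mu /\ forall A : {fset G}, A != fset0 -> mu * (#|` A|)%:R <= (aY A)%:R.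
Proof.
set E := [set r : R | exists A : {fset G}, A != fset0 /\ r = ((aY A)%:R / (#|` A|)%:R)%R]%classic.
have lb0 : lbound E 0.
  by move=> r [A [_ ->]]; rewrite divr_ge0 ?ler0n.
have ne : (E !=set0)%classic.
  exists ((aY [fset (1%g : G)])%:R / (#|` [fset (1%g : G)]|)%:R); exists [fset (1%g : G)]; split => //.
  by apply/fset0Pn; exists 1%g; rewrite in_fset1.
split; first exact: lb_le_inf.
move=> A A0; have := @ge_inf R E (ex_intro _ 0 lb0) ((aY A)%:R / (#|` A|)%:R).
have nA : (0 < (#|` A|)%:R :> R) by rewrite ltr0n cardfs_gt0.
by rewrite ler_pdivlMr //; apply; exists A.
Qed.

Lemma mu_ge0 : 0 <= mu. Proof. by case: mu_props. Qed.
Lemma mu_le A : A != fset0 -> mu * (#|` A|)%:R <= (aY A)%:R.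
Proof. by case: mu_props => _; apply. Qed.

Lemma c_ge (lam : R) A : A != fset0 -> (mu - lam) * (#|` A|)%:R <= c lam A.
Proof. move=> A0; have := mu_le A0; rewrite cE; lra. Qed.

Lemma c_ltrans (lam : R) g A : c lam (ltrans g A) = c lam A.
Proof. by rewrite !cE aY_ltrans ?card_ltrans. Qed.

Definition isMin (lam : R) H := H != fset0 /\ forall A, A != fset0 -> c lam H <= c lam A.

Lemma fset1_neq0 : [fset (1%g : G)] != fset0 :> {fset G}.
Proof. by apply/fset0Pn; exists 1%g; rewrite in_fset1. Qed.

Lemma exists_min (lam : R) : 0 <= lam < mu -> exists H, isMin lam H.
Proof.
case/andP => l0 lmu.
set c1 := c lam [fset (1%g : G)].
have c1ge : 0 <= c1.
  have := c_ge lam fset1_neq0; rewrite cardfs1 mulr1 => h.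
  by apply: le_trans h; rewrite subr_ge0 ltW.
pose K2 := Num.Def.archi_bound (c1 / (mu - lam)).
pose K1 := Num.Def.archi_bound (c1 + lam * K2%:R).
have ml : 0 < mu - lam by rewrite subr_gt0.
have Hb : forall A, A != fset0 /\ c lam A <= c1 -> (aY A < K1)%N /\ (#|` A| < K2)%N.
  move=> A [A0 cA].
  have nA : (#|` A|)%:R <= c1 / (mu - lam).
    by rewrite ler_pdivlMr // mulrC; apply: le_trans (c_ge lam A0) cA.
  have nK : (#|` A| < K2)%N.
    rewrite -(ltr_nat R); apply: le_lt_trans nA _; apply: archi_boundP.
    by rewrite divr_ge0 // ltW.
  split => //.
  rewrite -(ltr_nat R); apply: le_lt_trans (archi_boundP _); last first.
    by rewrite addr_ge0 // mulr_ge0 // ler0n.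
  have : c lam A <= c1 := cA; rewrite cE => h.
  have : (#|` A|)%:R <= K2%:R :> R by rewrite ler_nat ltnW.
  move=> h2; have h3 : lam * (#|` A|)%:R <= lam * K2%:R by rewrite ler_wpM2l.
  lra.
have [H [[H0 Hle] Hmin]] := @fin_min2 R {fset G} aY (fun A => #|` A|) (c lam) K1 K2
   (fun t t' e1 e2 => ltac:(by rewrite !cE e1 e2))
   (fun A => A != fset0 /\ c lam A <= c1)
   (ex_intro _ [fset (1%g : G)] (conj fset1_neq0 (lexx _))) Hb.
exists H; split => // A A0.
have [cA|cA] := leP (c lam A) c1; first by apply: Hmin.
by apply: le_trans Hle (ltW cA).
Qed.

Lemma submod_c (lam lam' : R) H H' : lam <= lam' ->
  c lam (H `&` H') + c lam' (H `|` H') <=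
  c lam H + c lam' H' - (lam' - lam) * ((#|` H|)%:R - (#|` H `&` H'|)%:R).
Proof.
move=> ll.
have s := aY_submod act Y H H'.
have e := cardfsUI H H'.
have s' : (aY (H `|` H'))%:R + (aY (H `&` H'))%:R <= (aY H)%:R + (aY H')%:R :> R.
  by rewrite -!natrD ler_nat.
have e' : (#|` H `|` H'|)%:R = (#|` H|)%:R + (#|` H'|)%:R - (#|` H `&` H'|)%:R :> R.
  by apply/eqP; rewrite eq_sym subr_eq -!natrD e.
rewrite !cE e'.
set x := (#|` H|)%:R; set y := (#|` H'|)%:R; set z := (#|` H `&` H'|)%:R.
have -> : lam' * (x + y - z) = lam' * x + lam' * y - lam' * z by ring.
have -> : (lam' - lam) * (x - z) = lam' * x - lam' * z - lam * x + lam * z by ring.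
lra.
Qed.

Lemma min_size (lam : R) : (exists H, isMin lam H) ->
  exists H, [/\ isMin lam H, 1%g \in H & forall H', isMin lam H' -> (#|` H| <= #|` H'|)%N].
Proof.
case=> H0 m0.
have ex : exists k, `[< exists H, isMin lam H /\ #|` H| = k >].
  by exists #|` H0|; apply/asboolP; exists H0.
case: (ex_minnP ex) => k /asboolP [H [mH eH]] kmin.
case: (mH) => /fset0Pn [a aH] Hm.
exists (ltrans a^-1 H); split.
- split; first by apply/fset0Pn; exists (a^-1 * a)%g; apply: in_imfset.
  by move=> A A0; rewrite c_ltrans; apply: Hm.
- by apply/imfsetP; exists a => //; rewrite mulVg.
- move=> H' mH'; rewrite card_ltrans eH; apply: kmin; apply/asboolP; by exists H'.
Qed.

Lemma min_subgroup (lam : R) H : isMin lam H -> 1%g \in H ->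
  (forall H', isMin lam H' -> (#|` H| <= #|` H'|)%N) -> is_subgroup H.
Proof.
move=> [H0 Hm] H1 Hsz.
have key : forall a, a \in H -> H = ltrans a^-1 H.
  move=> a aH; set H' := ltrans a^-1 H.
  have mH' : isMin lam H'.
    split; first by apply/fset0Pn; exists (a^-1 * a)%g; apply: in_imfset.
    by move=> A A0; rewrite c_ltrans; apply: Hm.
  have I1 : 1%g \in H `&` H'.
    by rewrite in_fsetI H1 /=; apply/imfsetP; exists a => //; rewrite mulVg.
  have I0 : H `&` H' != fset0 by apply/fset0Pn; exists 1%g.
  have U0 : H `|` H' != fset0 by apply/fset0Pn; exists 1%g; rewrite in_fsetU H1.
  have sm := submod_c H H' (lexx lam).
  have cU := Hm _ U0.
  have cH' : c lam H' = c lam H by rewrite c_ltrans.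
  have mI : isMin lam (H `&` H').
    split => // A A0; apply: le_trans (Hm _ A0).
    move: sm; rewrite subrr mul0r subr0 cH'; lra.
  have sI := Hsz _ mI.
  have eI : H `&` H' = H.
    apply/eqP; rewrite eqEfcard fsubsetIl /=; exact: sI.
  have sub : H `<=` H' by rewrite -eI fsubsetIr.
  apply/eqP; rewrite eqEfcard sub /= /H' card_ltrans //.
split => //; split.
  move=> g h gH hH.
  have := key _ gH => e; move: hH; rewrite {1}e => /imfsetP [x xH ->].
  by rewrite mulgA mulgV mul1g.
move=> g gH; rewrite (key _ gH); apply/imfsetP; exists 1%g => //.
by rewrite mulg1.
Qed.

Lemma min_nested (lam lam' : R) H H' : isMin lam H -> isMin lam' H' ->
  H `&` H' != fset0 -> lam < lam' -> H `<=` H'.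
Proof.
move=> [H0 Hm] [H0' Hm'] I0 ll.
have U0 : H `|` H' != fset0 by rewrite fsetU_eq0 negb_and H0.
have sm := submod_c H H' (ltW ll).
have c1 := Hm _ I0; have c2 := Hm' _ U0.
have p : (lam' - lam) * ((#|` H|)%:R - (#|` H `&` H'|)%:R) <= 0 by lra.
have q : (#|` H|)%:R - (#|` H `&` H'|)%:R <= 0 :> R.
  by move: p; rewrite pmulr_rle0 // subr_gt0.
have eI : H `&` H' = H.
  apply/eqP; rewrite eqEfcard fsubsetIl /= -(ler_nat R); lra.
by rewrite -eI fsubsetIr.
Qed.

Lemma actset_rtrans H g : in_stab act Y g ->
  actset act (rtrans H g) Y = actset act H Y.
Proof.
rewrite /in_stab => st; apply/fsetP => x; apply/actsetP/actsetP.
  move=> [b /imfsetP [h hH ->] [y yY ->]]; exists h => //; exists (act g y).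
    by rewrite -st; apply: mem_actset; rewrite ?in_fset1.
  by rewrite actM.
move=> [h hH [y]]; rewrite -{1}st => /actsetP [g' + [y' y'Y ->]] ->.
rewrite in_fset1 => /eqP ->; exists (h * g)%g; first by apply: in_imfset.
by exists y' => //; rewrite actM.
Qed.

Lemma min_GY (lam : R) H g : 0 < lam -> isMin lam H -> 1%g \in H ->
  in_stab act Y g -> g \in H.
Proof.
move=> l0 [H0 Hm] H1 st; apply/negPn/negP => gH.
set A := H `|` rtrans H g.
have A0 : A != fset0 by rewrite fsetU_eq0 negb_and H0.
have aA : aY A = aY H by rewrite /aY /A actsetU actset_rtrans // fsetUid.
have nA : (#|` H| < #|` A|)%N.
  apply: fproper_ltn_card; rewrite fproperEneq fsubsetUl andbT.
  apply/eqP => e; move: gH; rewrite e in_fsetU; apply/negP; rewrite negbK orbC.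
  by apply/orP; left; apply/imfsetP; exists 1%g => //; rewrite mul1g.
have := Hm _ A0; rewrite !cE aA.
have : (#|` H|)%:R < (#|` A|)%:R :> R by rewrite ltr_nat.
move=> h1 h2; have : lam * (#|` H|)%:R < lam * (#|` A|)%:R by rewrite ltr_pM2l.
lra.
Qed.

End Main.

Section Main2.
Variables (G : groupType) (X : choiceType) (act : G -> X -> X).
Hypothesis Hact : is_action act.
Variable Y : {fset X}.
Variable R : realType.

Local Notation aY := (aY act Y).
Local Notation mu := (mu R act Y).
Local Notation c := (cY act Y).
Local Notation isMin := (isMin act Y).

Definition goodH (lam : R) : set {fset G} := fun H =>
  [/\ isMin lam H, 1%g \in H & forall H', isMin lam H' -> (#|` H| <= #|` H'|)%N].

Definition Hf (lam : R) := xget fset0 (goodH lam).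

Lemma Hf_good lam : 0 <= lam < mu -> goodH lam (Hf lam).
Proof. move=> l; apply: xgetPex; apply: (min_size Hact); exact: exists_min. Qed.

Lemma Hf_min lam : 0 <= lam < mu -> isMin lam (Hf lam).
Proof. by move/Hf_good => []. Qed.

Lemma Hf_one lam : 0 <= lam < mu -> 1%g \in Hf lam.
Proof. by move/Hf_good => []. Qed.

Lemma Hf_sub lam : 0 <= lam < mu -> is_subgroup (Hf lam).
Proof. by move/Hf_good => [m o s]; exact: (min_subgroup Hact m o s). Qed.

Lemma Hf_GY lam g : 0 < lam < mu -> in_stab act Y g -> g \in Hf lam.
Proof.
case/andP => l0 lm st.
have l : 0 <= lam < mu by rewrite ltW.
exact: (min_GY Hact l0 (Hf_min l) (Hf_one l) st).
Qed.

Lemma Hf_mono lam lam' : 0 <= lam -> lam <= lam' -> lam' < mu -> Hf lam `<=` Hf lam'.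
Proof.
move=> l0 ll lm.
have l : 0 <= lam < mu by rewrite l0 (le_lt_trans ll lm).
have l' : 0 <= lam' < mu by rewrite (le_trans l0 ll) lm.
have [->|ne] := eqVneq lam lam'; first exact: fsubset_refl.
apply: min_nested (Hf_min l) (Hf_min l') _ _; last by rewrite lt_neqAle ne ll.
by apply/fset0Pn; exists 1%g; rewrite in_fsetI !Hf_one.
Qed.

Lemma aY1 : aY [fset (1%g : G)] = #|` Y|.
Proof.
congr (#|` _|); apply/fsetP => x; apply/actsetP/idP.
  by move=> [a]; rewrite in_fset1 => /eqP -> [y yY ->]; rewrite act1.
by move=> xY; exists 1%g; rewrite ?in_fset1 //; exists x => //; rewrite act1.
Qed.

Definition good_for (lam : R) H := [/\ is_subgroup H, 1%g \in H,
  (forall g, in_stab act Y g -> g \in H) & isMin lam H].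

Section Pos.
Hypothesis mu_pos : 0 < mu.

Lemma case_mid lam : 0 < lam < mu -> exists H, good_for lam H.
Proof.
move=> l; have l' : 0 <= lam < mu by case/andP: l => a b; rewrite ltW.
exists (Hf lam); split; [exact: Hf_sub|exact: Hf_one| |exact: Hf_min].
by move=> g; apply: Hf_GY.
Qed.

Lemma case_zero : exists H, good_for 0 H.
Proof.
set k := (#|` Y|)%:R : R.
have k0 : 0 <= k by rewrite ler0n.
set lam := mu / (2 * k + 2).
have d0 : 0 < 2 * k + 2 by lra.
have lpos : 0 < lam by rewrite divr_gt0.
have lmu : lam * (2 * k + 2) = mu by rewrite /lam mulfVK // gt_eqF.
have lm : lam < mu by nra.
have [H [Hs H1 HG [H0 Hm]]] := case_mid (lam := lam) ltac:(by rewrite lpos lm).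
exists H; split => //; split => // A A0.
have cH := Hm _ (fset1_neq0 G).
rewrite !cE aY1 cardfs1 in cH.
have muH := mu_le act Y R H0.
have : ((aY H)%:R : R) < k + 1.
  set n := (#|` H|)%:R : R in cH muH.
  have n0 : 0 <= n by rewrite ler0n.
  nra.
have e1 : k + 1 = ((#|` Y|).+1)%:R :> R by rewrite -natr1.
rewrite e1 ltr_nat ltnS => aH.
rewrite !cE !mul0r !subr0 ler_nat; apply: leq_trans aH _.
exact: (aY_ge_Y' Hact Y A0).
Qed.

End Pos.

End Main2.


Lemma sum_const_seq (T : Type) (s : seq T) (k : nat) : (\sum_(i <- s) k)%N = (size s * k)%N.
Proof. by rewrite big_const_seq count_predT iter_addn_0 mulnC. Qed.

Section Orbits.
Variables (G : groupType) (X : choiceType) (act : G -> X -> X).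
Hypothesis Hact : is_action act.
Let act1 := act1 Hact.
Let actM := actM Hact.
Let actK := actK Hact.

Definition O (H : {fset G}) (t : X) := actset act H [fset t].
Definition St (H : {fset G}) (t : X) := [fset h in H | act h t == t].

Lemma OP H t x : reflect (exists2 h, h \in H & x = act h t) (x \in O H t).
Proof.
apply: (iffP (actsetP _ _ _ _)).
  by move=> [h hH [y]]; rewrite in_fset1 => /eqP -> ->; exists h.
by move=> [h hH ->]; exists h => //; exists t; rewrite ?in_fset1.
Qed.

Lemma O_mono H H' t : H `<=` H' -> O H t `<=` O H' t.
Proof. exact: actsetS. Qed.

Lemma St_mono H H' t : H `<=` H' -> St H t `<=` St H' t.
Proof.
move=> /fsubsetP s; apply/fsubsetP => h; rewrite !inE /= => /andP [hH ->].
by rewrite (s _ hH).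
Qed.

Lemma St_pos H t : 1%g \in H -> (0 < #|` St H t|)%N.
Proof.
move=> H1; rewrite cardfs_gt0; apply/fset0Pn; exists 1%g; rewrite !inE /=; apply/andP; split; [exact: H1| by rewrite act1].
Qed.

Lemma O_self H t : 1%g \in H -> t \in O H t.
Proof. by move=> H1; apply/OP; exists 1%g; rewrite ?act1. Qed.

Lemma O_trans H t x : is_subgroup H -> x \in O H t -> O H x = O H t.
Proof.
move=> [H1 [HM HV]] /OP [h hH ->]; apply/fsetP => z; apply/OP/OP.
  by move=> [g gH ->]; exists (g * h)%g; rewrite ?actM //; apply: HM.
move=> [g gH ->]; exists (g * h^-1)%g; first by apply: HM => //; apply: HV.
by rewrite -actM -mulgA mulVg mulg1.
Qed.

Lemma O_sym H t x : is_subgroup H -> x \in O H t -> t \in O H x.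
Proof.
move=> Hs xO; rewrite (O_trans Hs xO); apply: O_self; by case: Hs.
Qed.

Lemma orbit_stab H t : is_subgroup H -> (#|` O H t| * #|` St H t| = #|` H|)%N.
Proof.
move=> Hs; have [H1 [HM HV]] := Hs.
have eO : O H t = [fset act h t | h in H].
  by apply/fsetP => x; apply/OP/imfsetP.
rewrite (card_fset_sum1 H) (partition_big_imfset _ (fun h => act h t)) -eO.
rewrite (card_fset_sum1 (O H t)) big_distrl /=.
apply: eq_big_seq => x xO; rewrite mul1n big_fset_condE -card_fset_sum1.
have [h0 h0H ex] := OP _ _ _ xO.
have -> : [fset i in H | act i t == x] = ltrans h0 (St H t).
  apply/fsetP => h; rewrite !inE /=; apply/andP/imfsetP.
    move=> [hH /eqP e]; exists (h0^-1 * h)%g; last by rewrite mulVKg.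
    rewrite !inE /= HM ?HV //= actM e ex actK //.
  move=> [g]; rewrite !inE /= => /andP [gH /eqP e] ->; split; first exact: HM.
  by rewrite actM e ex.
by rewrite card_ltrans.
Qed.

Lemma actset_cover H (T Y : {fset X}) : is_subgroup H -> T `<=` Y ->
  Y `<=` actset act H T -> actset act H Y = actset act H T.
Proof.
move=> [H1 [HM HV]] TY /fsubsetP YHT; apply/eqP; rewrite eqEfsubset; apply/andP; split; last first.
  apply/fsubsetP => x /actsetP [h hH [t tT ->]]; apply: mem_actset => //.
  by apply: (fsubsetP TY).
apply/fsubsetP => x /actsetP [h hH [y /YHT /actsetP [g gH [t tT ->]] ->]].
by rewrite -actM; apply: mem_actset => //; apply: HM.
Qed.

Lemma card_actset_disj H (T : {fset X}) : is_subgroup H ->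
  (forall t t', t \in T -> t' \in T -> t' \in O H t -> t = t') ->
  #|` actset act H T| = (\sum_(t <- T) #|` O H t|)%N.
Proof.
move=> Hs dis; have H1 := Hs.1.
have sub : forall t, t \in T -> O H t `<=` actset act H T.
  move=> t tT; apply/fsubsetP => x /OP [h hH ->]; exact: mem_actset.
rewrite card_fset_sum1.
transitivity (\sum_(x <- actset act H T) \sum_(t <- T) ((x \in O H t) : nat))%N.
  apply: eq_big_seq => x /actsetP [h hH [t0 t0T ->]].
  rewrite (bigD1_seq t0) ?fset_uniq //=.
  have -> : act h t0 \in O H t0 by apply/OP; exists h.
  rewrite big_seq_cond big1 ?addn0 // => t /andP [tT tne]; apply/eqP; rewrite eqb0; apply/negP => xO.
  have : t0 \in O H t.
    by rewrite -(O_trans Hs xO); apply: O_sym => //; apply/OP; exists h.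
  by move/(dis _ _ tT t0T) => e; move: tne; rewrite e eqxx.
rewrite exchange_big /=; apply: eq_big_seq => t tT.
have -> : (\sum_(x <- actset act H T) ((x \in O H t) : nat))%N =
   (\sum_(x <- actset act H T | x \in O H t) 1)%N.
  by rewrite [RHS]big_mkcond; apply: eq_bigr => x _; case: (x \in _).
rewrite big_fset_condE -card_fset_sum1; congr (#|` _|).
apply/fsetP => x; rewrite !inE /=; apply/andP/idP; first by case.
by move=> xO; split => //; apply: (fsubsetP (sub _ tT)).
Qed.

Lemma mincover_disj H (T Y : {fset X}) : is_subgroup H -> Y `<=` actset act H T ->
  (forall T', T' `<=` T -> Y `<=` actset act H T' -> (#|` T| <= #|` T'|)%N) ->
  forall t t', t \in T -> t' \in T -> t' \in O H t -> t = t'.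
Proof.
move=> [H1 [HM HV]] cov mn t t' tT t'T /OP [g gH e].
apply/eqP; apply/negPn/negP => ne.
have cov' : Y `<=` actset act H (T `\ t').
  apply/fsubsetP => y /(fsubsetP cov) /actsetP [h hH [s sT ->]].
  have [es|nes] := eqVneq s t'.
    have -> : act h s = act (h * g)%g t by rewrite es e actM.
    apply: mem_actset; first exact: HM.
    by rewrite in_fsetD1 ne.
  by apply: mem_actset => //; rewrite in_fsetD1 nes.
have := mn _ (fsubsetDl _ _) cov'; rewrite (cardfsD1 t' T) t'T.
by rewrite add1n ltnn.
Qed.

End Orbits.

Section MuCase.
Variables (G : groupType) (X : choiceType) (act : G -> X -> X).
Hypothesis Hact : is_action act.
Variable Y : {fset X}.
Variable R : realType.

Local Notation aY := (aY act Y).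
Local Notation mu := (mu R act Y).
Local Notation c := (cY act Y).
Local Notation isMin := (isMin act Y).

Hypothesis mu_pos : 0 < mu.

Definition ok (l : R) := 0 < l < mu.
Local Notation H := (Hf act Y (R:=R)).
Definition nn (l : R) := #|` H l|.
Definition d (l : R) := c mu (H l).
Definition ev (P : R -> Prop) := exists l0, ok l0 /\ forall l, l0 <= l < mu -> P l.

Lemma ok_le l0 l : ok l0 -> l0 <= l < mu -> ok l.
Proof. by case/andP => a _ /andP [b e]; rewrite /ok e (lt_le_trans a b). Qed.

Lemma ok_w l : ok l -> 0 <= l < mu.
Proof. by case/andP => a b; rewrite ltW. Qed.

Lemma ev_and P Q : ev P -> ev Q -> ev (fun l => P l /\ Q l).
Proof.
move=> [a [oa Pa]] [b [ob Qb]]; exists (Num.max a b); split.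
  by rewrite /ok; case: (leP a b).
move=> l /andP [ml lm]; move: ml; rewrite ge_max => /andP [al bl].
by split; [apply: Pa|apply: Qb]; rewrite ?al ?bl.
Qed.

Lemma ev_true : ev (fun _ => True).
Proof.
exists (mu / 2); split => //.
by rewrite /ok divr_gt0 //= ltr_pdivrMr // ltr_pMr // ltr1n.
Qed.

Lemma ev_seq (T : eqType) (s : seq T) (P : T -> R -> Prop) :
  (forall t, t \in s -> ev (P t)) -> ev (fun l => forall t, t \in s -> P t l).
Proof.
elim: s => [|a s IH] hs.
  by case: ev_true => l0 [o _]; exists l0; split => // l _ t.
have [l0 [o h]] := ev_and (hs a (mem_head _ _)) (IH (fun t ts => hs t ltac:(by rewrite in_cons ts orbT))).
exists l0; split => // l lr t; rewrite in_cons => /orP [/eqP ->|ts].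
  by case: (h _ lr).
by case: (h _ lr) => _; apply.
Qed.

Lemma ev_pt P : ev P -> exists l, ok l /\ P l.
Proof. by move=> [l0 [o h]]; exists l0; split => //; apply: h; rewrite lexx; case/andP: o. Qed.

Lemma H_mono l l' : ok l -> ok l' -> l <= l' -> H l `<=` H l'.
Proof.
move=> /andP [a _] /andP [_ b] ll; exact: (Hf_mono Hact (ltW a) ll b).
Qed.

Lemma H_min l : ok l -> isMin l (H l).
Proof. by move/ok_w; exact: (Hf_min Hact). Qed.

Lemma H_sub l : ok l -> is_subgroup (H l).
Proof. by move/ok_w; exact: (Hf_sub Hact). Qed.

Lemma H_one l : ok l -> 1%g \in H l.
Proof. by move/ok_w; exact: (Hf_one Hact). Qed.

Lemma H0 l : ok l -> H l != fset0.
Proof. by move=> o; apply/fset0Pn; exists 1%g; apply: H_one. Qed.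

Lemma d_ge0 l : ok l -> 0 <= d l.
Proof. move=> o; have := c_ge act Y mu (H0 o); rewrite subrr mul0r; exact. Qed.

Lemma strict l l' : ok l -> ok l' -> l <= l' -> H l != H l' ->
  d l' < d l /\ (nn l < nn l')%N.
Proof.
move=> o o' ll ne.
have sub := H_mono o o' ll.
have lt : (nn l < nn l')%N.
  by apply: fproper_ltn_card; rewrite fproperEneq ne sub.
split => //.
have m := (H_min o').2 _ (H0 o).
move: m; rewrite /d !cE.
have : (nn l)%:R < (nn l')%:R :> R by rewrite ltr_nat.
rewrite /nn => h1 h2.
have lm : l' < mu by case/andP: o'.
have : l' * ((#|` H l'|)%:R - (#|` H l|)%:R) < mu * ((#|` H l'|)%:R - (#|` H l|)%:R).
  by rewrite ltr_pM2r // subr_gt0.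
lra.
Qed.

Lemma d_mono l l' : ok l -> ok l' -> l <= l' -> d l' <= d l.
Proof.
move=> o o' ll; have [e|ne] := eqVneq (H l) (H l'); first by rewrite /d e.
by apply: ltW; case: (strict o o' ll ne).
Qed.

Lemma stab_good : (exists l0, ok l0 /\ forall l, l0 <= l < mu -> H l = H l0) ->
  exists K, good_for act Y mu K.
Proof.
move=> [l0 [o st]].
exists (H l0); split; [exact: H_sub|exact: H_one| |].
  by move=> g; apply: (Hf_GY Hact).
split; first exact: H0.
move=> A A0; rewrite leNgt; apply/negP => lt.
set del := c mu (H l0) - c mu A.
have dp : 0 < del by rewrite subr_gt0.
set nA := (#|` A|)%:R : R.
have nA0 : 0 <= nA by rewrite ler0n.
set eps := Num.min (mu - l0) (del / (nA + 1)).
have ep : 0 < eps.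
  rewrite lt_min subr_gt0; case/andP: o => _ -> /=.
  by rewrite divr_gt0 //; lra.
have e1 : eps <= mu - l0 by rewrite ge_min lexx.
have e2 : eps <= del / (nA + 1) by rewrite ge_min lexx orbT.
have e3 : eps * (nA + 1) <= del by rewrite -ler_pdivlMr //; lra.
set l := mu - eps.
have lr : l0 <= l < mu by rewrite /l; apply/andP; split; lra.
have := (H_min (ok_le o lr)).2 _ A0.
rewrite (st _ lr) !cE /l => h.
have hdel : del = ((aY (H l0))%:R - mu * (#|` H l0|)%:R) - ((aY A)%:R - mu * nA) by rewrite /del !cE.
have en : 0 <= eps * (#|` H l0|)%:R by rewrite mulr_ge0 // ltW.
move: h e3; rewrite !mulrBl mulrDr mulr1 hdel /nA; lra.
Qed.

Definition s (t : X) (l : R) := #|` St act (H l) t|.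

Lemma s_mono t l l' : ok l -> ok l' -> l <= l' -> (s t l <= s t l')%N.
Proof. by move=> o o' ll; apply: fsubset_leq_card; apply: St_mono; apply: H_mono. Qed.

Section Tail.
Hypothesis NS : forall l0, ok l0 -> exists l, [/\ ok l, l0 <= l & H l != H l0].
Variable T : {fset X}.
Variable ls : R.
Hypothesis ols : ok ls.
Hypothesis TY : T `<=` Y.
Hypothesis covT : forall l, ls <= l < mu -> Y `<=` actset act (H l) T.
Hypothesis disT : forall l, ls <= l < mu ->
  forall t t', t \in T -> t' \in T -> t' \in O act (H l) t -> t = t'.
Variable bnd : pred X.
Variable mt : X -> nat.
Hypothesis bndB : forall t, t \in T -> bnd t ->
  (0 < mt t)%N /\ forall l, ls <= l < mu -> s t l = mt t.
Hypothesis bndN : forall t, t \in T -> ~~ bnd t -> forall M, ev (fun l => (M < s t l)%N).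

Lemma tail_ok l : ls <= l < mu -> ok l.
Proof. exact: ok_le. Qed.

Lemma aY_tail l : ls <= l < mu -> aY (H l) = (\sum_(t <- T) #|` O act (H l) t|)%N.
Proof.
move=> lr; have o := tail_ok lr.
rewrite /Submission.aY (actset_cover Hact (H_sub o) TY (covT lr)).
exact: (card_actset_disj Hact (H_sub o) (disT lr)).
Qed.

Definition B := [fset x in T | bnd x].
Definition Nb := [fset x in T | ~~ bnd x].
Definition beta : R := \sum_(t <- B) ((mt t)%:R)^-1.
Definition p (l : R) := (\sum_(t <- Nb) #|` O act (H l) t|)%N.

Lemma ident l : ls <= l < mu -> ((aY (H l))%:R : R) = (nn l)%:R * beta + (p l)%:R.
Proof.
move=> lr; have o := tail_ok lr.
rewrite aY_tail // (big_fsetID _ bnd) natrD natr_sum /beta mulr_sumr; congr (_ + _).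
apply: eq_big_seq => t; rewrite !inE /= => /andP [tT bt].
have [m0 e] := bndB tT bt.
have os := orbit_stab Hact t (H_sub o).
rewrite /s in e; rewrite e // in os.
have mr : ((mt t)%:R : R) != 0 by rewrite pnatr_eq0 -lt0n.
apply: (mulIf mr); rewrite -natrM os divfK //.
Qed.

Lemma d_tail l : ls <= l < mu -> d l = (nn l)%:R * (beta - mu) + (p l)%:R.
Proof. by move=> lr; rewrite /d cE ident // /nn; ring. Qed.

Lemma nn_unb K : exists l, ls <= l < mu /\ (K <= nn l)%N.
Proof.
elim: K => [|K [l [lr Kl]]].
  by exists ls; split => //; rewrite lexx; case/andP: ols.
have o := tail_ok lr.
have [l' [o' ll ne]] := NS o.
have ne' : H l != H l' by rewrite eq_sym.
have [_ lt] := strict o o' ll ne'.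
exists l'; split; last exact: leq_ltn_trans Kl lt.
by case/andP: lr => a _; case/andP: o' => _ b; rewrite (le_trans a ll) b.
Qed.

Lemma beta_le_mu : beta <= mu.
Proof.
rewrite leNgt; apply/negP => bm.
have ls_r : ls <= ls < mu by rewrite lexx; case/andP: ols.
have d0 := d_ge0 ols.
set K := Num.Def.archi_bound (d ls / (beta - mu)).
have Kb : d ls / (beta - mu) < K%:R by apply: archi_boundP; rewrite divr_ge0 // subr_ge0 ltW.
have [l [lr Kl]] := nn_unb K.
have dm := d_mono ols (tail_ok lr) (andP lr).1.
have := d_tail lr; rewrite -/(nn l) => dl.
have p0 : 0 <= ((p l)%:R : R) by rewrite ler0n.
have Kn : (K%:R : R) <= (nn l)%:R by rewrite ler_nat.
have bm0 : 0 < beta - mu by rewrite subr_gt0.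
have h1 : d ls < K%:R * (beta - mu) by rewrite -ltr_pdivrMr.
have h2 : K%:R * (beta - mu) <= (nn l)%:R * (beta - mu) by rewrite ler_pM2r.
lra.
Qed.

Lemma mu_le_beta : mu <= beta.
Proof.
rewrite leNgt; apply/negP => bm.
have bm0 : 0 < mu - beta by rewrite subr_gt0.
set k := (#|` Y|)%:R : R.
have k0 : 0 <= k by rewrite ler0n.
set M := Num.Def.archi_bound (k / (mu - beta)).
have Mb : k / (mu - beta) < M%:R by apply: archi_boundP; rewrite divr_ge0 // ltW.
have evN : ev (fun l => forall t, t \in Nb -> (M < s t l)%N).
  apply: ev_seq => t; rewrite !inE /= => /andP [tT nb]; exact: bndN.
have evT : ev (fun l => ls <= l).
  by exists ls; split => // l /andP [].
have [l [o [hN hl]]] := ev_pt (ev_and evN evT).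
have lr : ls <= l < mu by rewrite hl; case/andP: o.
have pb : (p l * M.+1 <= #|` Y| * nn l)%N.
  rewrite /p big_distrl /=.
  apply: (@leq_trans (\sum_(t <- Nb) nn l)%N).
    rewrite [X in (X <= _)%N]big_seq [X in (_ <= X)%N]big_seq.
    apply: leq_sum => t tN.
    rewrite /nn -(orbit_stab Hact t (H_sub o)) leq_mul2l; apply/orP; right.
    exact: hN.
  rewrite sum_const_seq leq_mul2r; apply/orP; right.
  apply: (@leq_trans #|` T|); last exact: fsubset_leq_card.
  apply: fsubset_leq_card; apply/fsubsetP => x; rewrite !inE /=; by case/andP.
have pb' : ((p l)%:R : R) * (M.+1)%:R <= k * (nn l)%:R.
  by rewrite -!natrM ler_nat.
have ml := mu_le act Y R (H0 o).
rewrite (ident lr) -/(nn l) in ml.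
have n0 : (0 < (nn l)%:R :> R) by rewrite ltr0n cardfs_gt0 H0.
have M1 : (M.+1)%:R = (M%:R + 1 : R) by rewrite -natr1.
have Mp : k < M%:R * (mu - beta) by rewrite -ltr_pdivrMr.
set N := (nn l)%:R in ml pb' n0.
set P := (p l)%:R in ml pb'.
rewrite M1 in pb'.
have h1 : (mu - beta) * N <= P by lra.
have h2 : (mu - beta) * N * (M%:R + 1) <= P * (M%:R + 1).
  by rewrite ler_wpM2r // addr_ge0 // ler0n.
have h3 : k * N < M%:R * (mu - beta) * N by rewrite ltr_pM2r.
have h4 : 0 <= (mu - beta) * N by rewrite mulr_ge0 // ltW.
nra.
Qed.

Lemma tail_false : False.
Proof.
have eb : beta = mu by apply/eqP; rewrite eq_le beta_le_mu mu_le_beta.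
have dp : forall l, ls <= l < mu -> d l = (p l)%:R.
  by move=> l lr; rewrite d_tail // eb subrr mulr0 add0r.
have ls_r : ls <= ls < mu by rewrite lexx; case/andP: ols.
have key : forall k, exists l, ls <= l < mu /\ (p l + k <= p ls)%N.
  elim=> [|k [l [lr kl]]]; first by exists ls; split => //; rewrite addn0.
  have o := tail_ok lr.
  have [l' [o' ll ne]] := NS o.
  have ne' : H l != H l' by rewrite eq_sym.
  have [lt _] := strict o o' ll ne'.
  have lr' : ls <= l' < mu.
    by case/andP: lr => a _; case/andP: o' => _ b; rewrite (le_trans a ll) b.
  exists l'; split => //.
  move: lt; rewrite (dp _ lr) (dp _ lr') ltr_nat => lt.
  by rewrite addnS; apply: leq_trans kl; rewrite ltn_add2r.
have [l [_ h]] := key (p ls).+1.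
by move: h; rewrite addnS ltnNge leq_addl.
Qed.

End Tail.

Lemma stabilizes : exists l0, ok l0 /\ forall l, l0 <= l < mu -> H l = H l0.
Proof.
case: (pselect (exists l0, ok l0 /\ forall l, l0 <= l < mu -> H l = H l0)) => // NS0.
exfalso.
have NS : forall l0, ok l0 -> exists l, [/\ ok l, l0 <= l & H l != H l0].
  move=> l0 o; case: (pselect (exists l, [/\ ok l, l0 <= l & H l != H l0])) => // nl.
  exfalso; apply: NS0; exists l0; split => // l lr; apply/eqP; apply/negPn/negP => ne.
  by apply: nl; exists l; split => //; [exact: ok_le o lr| case/andP: lr].
pose covP k := exists l, ok l /\ exists T : {fset X},
  [/\ T `<=` Y, Y `<=` actset act (H l) T & #|` T| = k].
have exc : exists k, `[< covP k >].
  have [l [o _]] := ev_pt ev_true.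
  exists #|` Y|; apply/asboolP; exists l; split => //; exists Y; split => //.
  apply/fsubsetP => y yY; rewrite -(act1 Hact y); apply: mem_actset => //.
  exact: H_one.
case: (ex_minnP exc) => k0 /asboolP [l1 [o1 [T [TY cov1 eT]]]] kmin.
have covT : forall l, l1 <= l < mu -> Y `<=` actset act (H l) T.
  move=> l lr; apply: fsubset_trans cov1 _; apply: actsetS; apply: H_mono => //.
    exact: ok_le o1 lr.
  by case/andP: lr.
have disT : forall l, l1 <= l < mu ->
    forall t t', t \in T -> t' \in T -> t' \in O act (H l) t -> t = t'.
  move=> l lr; have o := ok_le o1 lr.
  apply: (mincover_disj Hact (H_sub o) (covT _ lr)) => T' T'T cov'.
  rewrite eT; apply: kmin; apply/asboolP; exists l; split => //; exists T'; split => //.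
  exact: fsubset_trans T'T TY.
pose bndP t := exists M, forall l, ok l -> (s t l <= M)%N.
pose bnd : pred X := fun t => `[< bndP t >].
pose mt t := xget 0%N (fun m => (0 < m)%N /\ ev (fun l => s t l = m)).
have hB : forall t, bndP t -> (0 < mt t)%N /\ ev (fun l => s t l = mt t).
  move=> t [M hM].
  suff ex : exists m, (0 < m)%N /\ ev (fun l => s t l = m) by exact: (xgetPex 0%N ex).
  have exk : exists k, `[< exists l, ok l /\ s t l = k >].
    have [l [o _]] := ev_pt ev_true; exists (s t l); apply/asboolP; by exists l.
  have ub : forall k, `[< exists l, ok l /\ s t l = k >] -> (k <= M)%N.
    by move=> k /asboolP [l [o <-]]; apply: hM.
  case: (ex_maxnP exk ub) => m /asboolP [lm [om em]] mx.
  exists m; split; first by rewrite -em; apply: (St_pos Hact); exact: H_one.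
  exists lm; split => // l lr; apply/eqP; rewrite eqn_leq; apply/andP; split.
    apply: mx; apply/asboolP; exists l; split => //; exact: ok_le om lr.
  rewrite -em; apply: s_mono => //; first exact: ok_le om lr.
  by case/andP: lr.
have hN : forall t, ~ bndP t -> forall M, ev (fun l => (M < s t l)%N).
  move=> t nb M.
  case: (pselect (exists l, ok l /\ (M < s t l)%N)) => [[l [o lt]]|nl].
    exists l; split => // l' lr; apply: leq_trans lt _; apply: s_mono => //.
      exact: ok_le o lr.
    by case/andP: lr.
  exfalso; apply: nb; exists M => l o; rewrite leqNgt; apply/negP => lt.
  by apply: nl; exists l.
have evB : ev (fun l => forall t, t \in [fset x in T | bnd x] -> s t l = mt t).
  by apply: ev_seq => t; rewrite !inE /= => /andP [tT /asboolP bt]; exact: (hB t bt).2.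
have evT : ev (fun l => l1 <= l) by exists l1; split => // l /andP [].
have [ls [ols hls]] := ev_and evB evT.
have covT' : forall l, ls <= l < mu -> Y `<=` actset act (H l) T.
  move=> l lr; apply: covT; case: (hls l lr) => _ a; by rewrite a; case/andP: lr.
have disT' : forall l, ls <= l < mu ->
    forall t t', t \in T -> t' \in T -> t' \in O act (H l) t -> t = t'.
  move=> l lr; apply: disT; case: (hls l lr) => _ a; by rewrite a; case/andP: lr.
have bB : forall t, t \in T -> bnd t ->
    (0 < mt t)%N /\ forall l, ls <= l < mu -> s t l = mt t.
  move=> t tT bt; split; first by have := hB t (asboolP _ bt); case.
  by move=> l lr; apply: (hls l lr).1; rewrite !inE tT bt.
have bN : forall t, t \in T -> ~~ bnd t -> forall M, ev (fun l => (M < s t l)%N).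
  move=> t tT nbt; apply: hN => bt; move: nbt; rewrite /bnd.
  by rewrite (asboolT bt).
exact: (@tail_false NS T ls ols TY covT' disT' bnd mt bB bN).
Qed.

Lemma case_mu' : exists K, good_for act Y mu K.
Proof. exact: stab_good stabilizes. Qed.

End MuCase.

Theorem mainTheorem8 (G : groupType) (X : choiceType) (act : G -> X -> X)
  (Hact : is_action act) (Y : {fset X}) (R : realType) :
  mu R act Y = 0 \/
  forall lam : R, 0 <= lam <= mu R act Y ->
    exists H : {fset G},
      is_subgroup H /\
      (forall g : G, in_stab act Y g -> g \in H) /\
      (forall A : {fset G}, A != fset0 ->
         cY act Y lam H <= cY act Y lam A /\
         #|` Y|%:R - lam * #|` H|%:R <= cY act Y lam H).
Proof.
have [->|mu0] := eqVneq (mu R act Y) 0; first by left.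
right.
have mp : 0 < mu R act Y by rewrite lt_neqAle eq_sym mu0 mu_ge0.
move=> lam /andP [l0 lm].
have [H [Hs H1 HG [H0 Hm]]] : exists H, good_for act Y lam H.
  have [<-|ln0] := eqVneq 0 lam; first exact: case_zero.
  have [->|lnm] := eqVneq lam (mu R act Y); first exact: (case_mu' Hact mp).
  apply: case_mid => //; rewrite lt_neqAle ln0 l0 /= lt_neqAle lnm lm //.
exists H; split => //; split => // A A0; split; first exact: Hm.
rewrite cE lerD2r ler_nat; exact: aY_ge_Y.
Qed.
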